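(* Let $(\mathcal{H},\langle\cdot,\cdot\rangle)$ be a real Hilbert space with induced norm $\lVert\cdot\rVert$, let $\tau,\tau_s>0$, $\alpha>0$, let $g\in\mathcal{C}^0(\mathbb{R}_{\geq0},\mathbb{R}_{\geq0})$ be monotone increasing with $g(0)=0$, and let $V\in\mathcal{C}^1(\mathbb{R}^2,\mathbb{R})$. Let $x_{s,0}\in\mathbb{R}_{\geq0}$ and $\mathbf{x}_0\in\mathcal{H}$. Assume: (A1) there exist constants $a>0$, $b\geq0$ and an increasing $h\in\mathcal{C}^0(\mathbb{R}_{\geq0},\mathbb{R}_{\geq0})$ with $h(0)=0$ such that $a r-b\leq\frac{\partial}{\partial r}V(r,x_s)$ for all $r\geq0$ and all $x_s\geq0$, and such that for all $\overline r\geq0$, all $r\in[0,\overline r]$ and all $x_s\in[0,|x_{s,0}|+g(\overline r)]$ one has $\frac{\partial}{\partial r}V(r,x_s)\leq h(\overline r)\,r$; (A2) the scalar gradient system $\dot r=-\frac{\partial}{\partial r}V(r,x_s)$ (with parameter $x_s$) has an equilibrium at $r=0$ which undergoes a subcritical pitchfork bifurcation at $x_s=\underline{x}_s$; more precisely there is $\overline{x}_s>\underline{x}_s$ such that for $x_s<\underline x_s$ it has two locally asymptotically stable equilibria $r=\pm r^*$; for $\underline x_s<x_s<\overline x_s$ it has three locally asymptotically stable equilibria $r=-r^*,0,r^*$ with $\partial r^*/\partial x_s<0$; and for $x_s>\overline x_s$, $r=0$ is globally asymptotically stable. Let $\mathbf{u}\in\mathcal{H}$ be constant with $\lVert\mathbf{u}\rVert>b/\alpha$,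 and let $(\mathbf{x}(t),x_s(t))$ be the solution, defined for $t\geq0$, of $$\tau\dot{\mathbf{x}}=-\frac{\partial}{\partial\mathbf{x}}V(\lVert\mathbf{x}\rVert,x_s)+\alpha\mathbf{u},\qquad \tau_s\dot{x}_s=-x_s+g(\lVert\mathbf{x}\rVert),$$ with $(\mathbf{x}(0),x_s(0))=(\mathbf{x}_0,x_{s,0})$. Then there exist a time $T\geq0$ and constants $\underline r,\overline r\in\mathbb{R}_{>0}$ such that $\lVert\mathbf{x}(t)\rVert\in[\underline r,\overline r]$ for all $t\geq T$.
   Context: $\frac{\partial}{\partial\mathbf{x}}V(\lVert\mathbf{x}\rVert,x_s)$ denotes the gradient in $\mathcal{H}$ of $\mathbf{x}\mapsto V(\lVert\mathbf{x}\rVert,x_s)$, equal to $\frac{\partial V}{\partial r}(\lVert\mathbf{x}\rVert,x_s)\,\mathbf{x}/\lVert\mathbf{x}\rVert$ for $\mathbf{x}\neq0$. Solutions are assumed to exist on $\mathbb{R}_{\geq0}$ for all initial conditions in $\mathcal{H}\times\mathbb{R}_{\geq0}$. *)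

(* Defs.v *)
From HB Require Import structures.
From mathcomp Require Import all_boot all_order all_algebra.
From mathcomp Require Import all_classical all_reals all_analysis.
Set Implicit Arguments. Unset Strict Implicit. Unset Printing Implicit Defensive.
Import Order.TTheory GRing.Theory Num.Theory.
Import numFieldNormedType.Exports.
Local Open Scope classical_set_scope.
Local Open Scope ring_scope.

(* [ip] is an inner product on H inducing the norm of H:
   symmetric, linear in the first argument, and ||x||^2 = <x,x>.
   Together with completeness of H this makes (H, ip) a real Hilbert space. *)
Definition inner_product_inducing_norm {R : realType} {H : normedModType R}
  (ip : H -> H -> R) : Prop :=
  [/\ forall x y, ip x y = ip y x,
      forall a x y z, ip (a *: x + y) z = a * ip x z + ip y z &
      forall x, `|x| ^+ 2 = ip x x].

Definition scalar_sol {R : realType} (f : R -> R) (r : R -> R) : Prop :=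
  {within `[0, +oo[, continuous r} /\
  forall t : R, 0 < t -> is_derive t 1 r (f (r t)).

Definition equilibrium {R : realType} (f : R -> R) (p : R) : Prop := f p = 0.

Definition lyap_stable {R : realType} (f : R -> R) (p : R) : Prop :=
  forall e : R, 0 < e -> exists2 d : R, 0 < d &
    forall r, scalar_sol f r -> `|r 0 - p| < d ->
      forall t : R, 0 <= t -> `|r t - p| < e.

Definition loc_asym_stable_eq {R : realType} (f : R -> R) (p : R) : Prop :=
  [/\ equilibrium f p, lyap_stable f p &
      exists2 d : R, 0 < d &
        forall r, scalar_sol f r -> `|r 0 - p| < d -> r t @[t --> +oo] --> p].

Definition glob_asym_stable_eq {R : realType} (f : R -> R) (p : R) : Prop :=
  [/\ equilibrium f p, lyap_stable f p &
      forall r, scalar_sol f r -> r t @[t --> +oo] --> p].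

(* Main.v *)
Require Import Defs.
From HB Require Import structures.
From mathcomp Require Import all_boot all_order all_algebra.
From mathcomp Require Import all_classical all_reals all_analysis.
From mathcomp Require Import ring lra.
Import Order.TTheory GRing.Theory Num.Theory.
Import numFieldNormedType.Exports.
Local Open Scope classical_set_scope.
Local Open Scope ring_scope.
Set Implicit Arguments. Unset Strict Implicit.

Lemma is_derive_cont (R : realType) (V : normedModType R) (f : R -> V) (t : R) (d : V) :
  is_derive t 1 f d -> {for t, continuous f}.
Proof.
move=> Hd; apply: differentiable_continuous; rewrite -derivable1_diffP.
exact: ex_derive.
Qed.

Lemma barrier (R : realType) (f df : R -> R) (t0 c : R) :
  {within `[t0, +oo[, continuous f} ->
  (forall t, t0 < t -> is_derive t 1 f (df t)) ->
  f t0 <= c ->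
  (forall t, t0 < t -> c < f t -> df t <= 0) ->
  forall t, t0 <= t -> f t <= c.
Proof.
move=> Hc Hd H0 Hdf t1 ht1; rewrite leNgt; apply/negP => Hlt.
have t01 : t0 < t1.
  rewrite lt_neqAle ht1 andbT; apply/negP => /eqP E; subst t1.
  by move: Hlt; rewrite ltNge H0.
pose S := [set t | t0 <= t <= t1 /\ f t <= c].
have hS : has_sup S.
  split; first by exists t0; rewrite /S /= lexx (ltW t01).
  by exists t1 => t [/andP [_ ?] _].
set s := sup S.
have s1 : s <= t1 by apply: ge_sup; [case: hS|] => // t [/andP [_ ?] _].
have s0 : t0 <= s by apply: sup_upper_bound => //; rewrite /S /= lexx (ltW t01).
have fs : f s <= c.
  have [E|st0] := eqVneq s t0; first by rewrite E.
  have st0' : t0 < s by rewrite lt_neqAle eq_sym st0 s0.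
  rewrite leNgt; apply/negP => cfs.
  have := cvgr_gt _ (@is_derive_cont R R^o f s _ (Hd _ st0')) _ cfs.
  move=> Hn; have [e /= e0 Hb] := iffLR (nbhs_ballP _ _) (Hn (nbhs_filter _)).
  have [t tS st] := sup_adherent e0 hS.
  have ts : t <= s := sup_upper_bound hS tS.
  have ft : f t <= c by case: tS.
  have : c < f t.
    apply: Hb; rewrite /ball /=.
    move: st; rewrite -/s => st.
    rewrite ger0_norm ?subr_ge0 //; lra.
  by rewrite ltNge ft.
have st1 : s < t1.
  rewrite lt_neqAle s1 andbT; apply/negP => /eqP E.
  by move: Hlt; rewrite -E ltNge fs.
have [xi xiI Hm] : exists2 xi, xi \in `]s, t1[ & f t1 - f s = df xi * (t1 - s).
  apply: MVT => //.
    move=> z; rewrite in_itv /= => /andP [sz _]; apply: Hd.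
    exact: le_lt_trans sz.
  apply: continuous_subspaceW Hc => z /=; rewrite !in_itv /= => /andP [sz _].
  by rewrite (le_trans s0 sz).
move: xiI; rewrite in_itv /= => /andP [sxi xit].
have cxi : c < f xi.
  rewrite ltNge; apply/negP => fxi.
  have : xi <= s by apply: sup_upper_bound => //; rewrite /S /= fxi (ltW xit) andbT (le_trans s0 (ltW sxi)).
  by rewrite leNgt sxi.
have := Hdf xi (le_lt_trans s0 sxi) cxi.
move=> dle.
have : f t1 - f s <= 0 by rewrite Hm; apply: mulr_le0_ge0 => //; rewrite subr_ge0 ltW.
move: Hlt fs; lra.
Qed.

Lemma ip0l (R : realType) (H : normedModType R) (ip : H -> H -> R) :
  inner_product_inducing_norm ip -> forall z, ip 0 z = 0.
Proof.
case=> _ Hl _ z; have := Hl 1 0 0 z; rewrite scaler0 addr0 mul1r; lra.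
Qed.

Lemma ipDl (R : realType) (H : normedModType R) (ip : H -> H -> R) :
  inner_product_inducing_norm ip -> forall x y z, ip (x + y) z = ip x z + ip y z.
Proof. by move=> [_ Hl _] x y z; rewrite -[x]scale1r Hl mul1r scale1r. Qed.

Lemma ipZl (R : realType) (H : normedModType R) (ip : H -> H -> R) :
  inner_product_inducing_norm ip -> forall a x z, ip (a *: x) z = a * ip x z.
Proof.
move=> Hip a x z; have [_ Hl _] := Hip.
by rewrite -[a *: x]addr0 Hl (ip0l Hip) addr0.
Qed.

Lemma ipNl (R : realType) (H : normedModType R) (ip : H -> H -> R) :
  inner_product_inducing_norm ip -> forall x z, ip (- x) z = - ip x z.
Proof. by move=> Hip x z; rewrite -scaleN1r (ipZl Hip) mulN1r. Qed.

Lemma ipBl (R : realType) (H : normedModType R) (ip : H -> H -> R) :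
  inner_product_inducing_norm ip -> forall x y z, ip (x - y) z = ip x z - ip y z.
Proof. by move=> Hip x y z; rewrite (ipDl Hip) (ipNl Hip). Qed.

Lemma ipDr (R : realType) (H : normedModType R) (ip : H -> H -> R) :
  inner_product_inducing_norm ip -> forall x y z, ip z (x + y) = ip z x + ip z y.
Proof. by move=> Hip x y z; have [Hs _ _] := Hip; rewrite !(Hs z) (ipDl Hip). Qed.

Lemma ipZr (R : realType) (H : normedModType R) (ip : H -> H -> R) :
  inner_product_inducing_norm ip -> forall a x z, ip z (a *: x) = a * ip z x.
Proof. by move=> Hip a x z; have [Hs _ _] := Hip; rewrite !(Hs z) (ipZl Hip). Qed.

Lemma ipNr (R : realType) (H : normedModType R) (ip : H -> H -> R) :
  inner_product_inducing_norm ip -> forall x z, ip z (- x) = - ip z x.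
Proof. by move=> Hip x z; have [Hs _ _] := Hip; rewrite !(Hs z) (ipNl Hip). Qed.

Lemma ipBr (R : realType) (H : normedModType R) (ip : H -> H -> R) :
  inner_product_inducing_norm ip -> forall x y z, ip z (x - y) = ip z x - ip z y.
Proof. by move=> Hip x y z; rewrite (ipDr Hip) (ipNr Hip). Qed.

Lemma ip_polar (R : realType) (H : normedModType R) (ip : H -> H -> R) :
  inner_product_inducing_norm ip -> forall p q,
  ip p q = (`|p + q| ^+ 2 - `|p| ^+ 2 - `|q| ^+ 2) / 2.
Proof.
move=> Hip p q; have [Hs _ Hn] := Hip.
rewrite !Hn (ipDl Hip) !(ipDr Hip) (Hs q p).
by field.
Qed.

Lemma ip_le (R : realType) (H : normedModType R) (ip : H -> H -> R) :
  inner_product_inducing_norm ip -> forall x u, ip x u <= `|x| * `|u|.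
Proof.
move=> Hip x u; have [Hs _ Hn] := Hip.
have E := Hn (`|u| *: x - `|x| *: u).
rewrite (ipBl Hip) !(ipBr Hip) !(ipZl Hip) !(ipZr Hip) -!Hn (Hs u x) in E.
have h0 := sqr_ge0 (Num.norm (Num.norm u *: x - Num.norm x *: u)).
rewrite E in h0.
have [x0|xn0] := eqVneq x 0.
  by rewrite x0 (ip0l Hip) normr0 mul0r.
have [u0|un0] := eqVneq u 0.
  by rewrite u0 (Hs x 0) (ip0l Hip) normr0 mulr0.
have Bp : 0 < `|x| by rewrite normr_gt0.
have Ap : 0 < `|u| by rewrite normr_gt0.
have ABp : 0 < `|x| * `|u| by apply: mulr_gt0.
nra.
Qed.

Lemma ip_ge (R : realType) (H : normedModType R) (ip : H -> H -> R) :
  inner_product_inducing_norm ip -> forall x u, - (`|x| * `|u|) <= ip x u.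
Proof.
move=> Hip x u; have := ip_le Hip x (- u).
by rewrite (ipNr Hip) normrN lerNl.
Qed.

Lemma ip_cvg (R : realType) (H : normedModType R) (ip : H -> H -> R)
  (T : Type) (F : set_system T) (FF : Filter F) (P Q : T -> H) p q :
  inner_product_inducing_norm ip ->
  P @ F --> p -> Q @ F --> q -> (fun t => ip (P t) (Q t)) @ F --> ip p q.
Proof.
move=> Hip HP HQ.
rewrite (ip_polar Hip).
have -> : (fun t => ip (P t) (Q t)) =
  (fun t => (`|P t + Q t| ^+ 2 - `|P t| ^+ 2 - `|Q t| ^+ 2) / 2).
  by apply: funext => t; rewrite (ip_polar Hip).
have sq : forall (g : T -> R) (a : R), g @ F --> a -> (fun t => g t ^+ 2) @ F --> a ^+ 2.
  move=> g a Hg; rewrite expr2.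
  have -> : (fun t => g t ^+ 2) = (fun t => g t * g t).
    by apply: funext => t; rewrite expr2.
  exact: cvgM.
apply: cvgMl; apply: cvgB; [apply: cvgB|]; apply: sq; apply: cvg_norm => //.
exact: cvgD.
Qed.

Lemma deriv_of_cvg (R : realType) (f : R -> R) (t l : R) :
  (fun h => h^-1 * (f (h + t) - f t)) @ 0^' --> l -> is_derive t 1 f l.
Proof.
move=> Hc.
have E : (fun h => h^-1 *: ((f \o shift t) (h *: 1) - f t)) =
         (fun h => h^-1 * (f (h + t) - f t)).
  by apply: funext => h /=; rewrite /GRing.scale /= mulr1.
apply: DeriveDef; first by rewrite /derivable E; apply: cvgP Hc.
by rewrite /derive E; apply: cvg_lim.
Qed.

Lemma cvg_of_deriv (R : realType) (H : normedModType R) (x : R -> H) (t : R) (d : H) :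
  is_derive t 1 x d -> (fun h => h^-1 *: (x (h + t) - x t)) @ 0^' --> d.
Proof.
move=> Hd.
have E : (fun h => h^-1 *: ((x \o shift t) (h *: 1) - x t)) =
         (fun h => h^-1 *: (x (h + t) - x t)).
  by apply: funext => h /=; rewrite /GRing.scale /= mulr1.
rewrite -E; apply: cvg_toP; first exact: ex_derive.
exact: derive_val.
Qed.



Lemma shift_cvg (R : realType) (H : normedModType R) (x : R -> H) (t : R) (d : H) :
  is_derive t 1 x d -> (fun h => x (h + t)) @ 0^' --> x t.
Proof.
move=> Hd.
have Hs : (fun h : R => h + t) @ 0^' --> t.
  apply: cvg_within_filter.
  have : (fun h : R => h + t) @ 0 --> 0 + t.
    by apply: cvgD; [exact: cvg_id | exact: cvg_cst].
  by rewrite add0r.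
have Hc := is_derive_cont Hd.
have := @cvg_comp _ _ _ _ _ _ _ _ Hs Hc.
by [].

Qed.

Lemma deriv_ipv (R : realType) (H : normedModType R) (ip : H -> H -> R)
  (x : R -> H) (t : R) (d v : H) :
  inner_product_inducing_norm ip -> is_derive t 1 x d ->
  is_derive t 1 (fun s => ip (x s) v) (ip d v).
Proof.
move=> Hip Hd; apply: deriv_of_cvg.
have -> : (fun h => h^-1 * (ip (x (h + t)) v - ip (x t) v)) =
          (fun h => ip (h^-1 *: (x (h + t) - x t)) v).
  by apply: funext => h; rewrite (ipZl Hip) (ipBl Hip).
apply: ip_cvg => //; [exact: cvg_of_deriv | exact: cvg_cst].
Qed.

Lemma deriv_ipsq (R : realType) (H : normedModType R) (ip : H -> H -> R)
  (x : R -> H) (t : R) (d : H) :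
  inner_product_inducing_norm ip -> is_derive t 1 x d ->
  is_derive t 1 (fun s => ip (x s) (x s)) (2 * ip (x t) d).
Proof.
move=> Hip Hd; have [Hs _ _] := Hip.
have -> : 2 * ip (x t) d = ip d (x t + x t).
  by rewrite (ipDr Hip) (Hs d); lra.
apply: deriv_of_cvg.
have -> : (fun h => h^-1 * (ip (x (h + t)) (x (h + t)) - ip (x t) (x t))) =
          (fun h => ip (h^-1 *: (x (h + t) - x t)) (x (h + t) + x t)).
  apply: funext => h; rewrite (ipZl Hip) (ipBl Hip) !(ipDr Hip) (Hs (x t) (x (h + t))).
  congr (_ * _); lra.
apply: ip_cvg => //; first exact: cvg_of_deriv.
apply: cvgD; [exact: shift_cvg Hd | exact: cvg_cst].
Qed.

Unset Implicit Arguments.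
Unset Strict Implicit.

Theorem lemma1 (R : realType) (H : completeNormedModType R) (ip : H -> H -> R)
  (tau taus alpha : R) (g : R -> R)
  (V dVr dVs : R -> R -> R) (xs0 : R) (x0 : H)
  (a b : R) (h : R -> R) (xlo xhi : R) (rstar : R -> R)
  (u : H) (x : R -> H) (xs : R -> R) (dx : R -> H) (dxs : R -> R) :
  (* Hilbert space structure *)
  inner_product_inducing_norm ip ->
  0 < tau -> 0 < taus -> 0 < alpha ->
  (* g in C^0(R>=0, R>=0), monotone increasing, g(0) = 0 *)
  {within `[0, +oo[, continuous g} ->
  (forall r, 0 <= r -> 0 <= g r) ->
  {in `[0, +oo[ &, {homo g : r1 r2 / r1 <= r2}} ->
  g 0 = 0 ->
  (* V in C^1(R^2, R): dVr, dVs are its partial derivatives, jointly continuous *)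
  (forall r s : R, is_derive r 1 (fun r' => V r' s) (dVr r s)) ->
  (forall r s : R, is_derive s 1 (fun s' => V r s') (dVs r s)) ->
  continuous (fun p : R * R => dVr p.1 p.2) ->
  continuous (fun p : R * R => dVs p.1 p.2) ->
  0 <= xs0 ->
  (* (A1) *)
  0 < a -> 0 <= b ->
  {within `[0, +oo[, continuous h} ->
  (forall r, 0 <= r -> 0 <= h r) ->
  {in `[0, +oo[ &, {homo h : r1 r2 / r1 <= r2}} ->
  h 0 = 0 ->
  (forall r s, 0 <= r -> 0 <= s -> a * r - b <= dVr r s) ->
  (forall rb r s, 0 <= rb -> 0 <= r <= rb -> 0 <= s <= `|xs0| + g rb ->
     dVr r s <= h rb * r) ->
  (* (A2): subcritical pitchfork of the equilibrium r = 0 of r' = - dV/dr (r, s) *)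
  (forall s, equilibrium (fun r => - dVr r s) 0) ->
  xlo < xhi ->
  (forall s, s < xlo ->
     0 < rstar s /\
     loc_asym_stable_eq (fun r => - dVr r s) (rstar s) /\
     loc_asym_stable_eq (fun r => - dVr r s) (- rstar s)) ->
  (forall s, xlo < s < xhi ->
     [/\ 0 < rstar s,
         loc_asym_stable_eq (fun r => - dVr r s) (- rstar s),
         loc_asym_stable_eq (fun r => - dVr r s) 0,
         loc_asym_stable_eq (fun r => - dVr r s) (rstar s) &
         derivable rstar s 1 /\ derive1 rstar s < 0]) ->
  (forall s, xhi < s -> glob_asym_stable_eq (fun r => - dVr r s) 0) ->
  (* constant input *)
  `|u| > b / alpha ->
  (* (x, xs) is a solution on t >= 0 with the given initial condition *)
  x 0 = x0 -> xs 0 = xs0 ->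
  {within `[0, +oo[, continuous x} ->
  {within `[0, +oo[, continuous xs} ->
  (forall t : R, 0 < t -> is_derive t 1 x (dx t)) ->
  (forall t : R, 0 < t -> is_derive t 1 xs (dxs t)) ->
  (forall t : R, 0 < t ->
     tau *: dx t = - (dVr `|x t| (xs t) * `|x t|^-1) *: x t + alpha *: u) ->
  (forall t : R, 0 < t -> taus * dxs t = - xs t + g `|x t|) ->
  exists T : R, exists rl : R, exists ru : R,
    [/\ 0 <= T, 0 < rl, 0 < ru &
        forall t : R, T <= t -> rl <= `|x t| <= ru].
Proof.
move=> Hip Htau Htaus Hal Hgc Hg0 Hgm Hg00 HV1 HV2 Hc1 Hc2 Hxs0 Ha Hb Hhc Hh0 Hhm Hh00
  HA1l HA1u Heq Hlohi HA2a HA2b HA2c Hu Hx0 Hxs0' Hxc Hxsc Hdx Hdxs Hode Hodes.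
have [Hs _ Hn] := Hip.
have xs_ge0 : forall t, 0 <= t -> 0 <= xs t.
  move=> t ht; rewrite -oppr_le0.
  have := @barrier R (- xs) (fun s => - dxs s) 0 0.
  apply => //.
  - by move=> s; apply: cvgN; apply: Hxsc.
  - by move=> s hs; apply: is_deriveN; apply: Hdxs.
  - by change (- xs 0 <= 0); rewrite Hxs0' oppr_le0.
  move=> s hs; change (0 < - xs s -> - dxs s <= 0); rewrite oppr_gt0 oppr_le0 => hxs.
  have := Hodes s hs; have := Hg0 `|x s| (normr_ge0 _); nra.
have Ap : 0 < `|u|.
  apply: le_lt_trans Hu; apply: divr_ge0 => //; exact: ltW.
have aAb : b < alpha * `|u|.
  by move: Hu; rewrite ltr_pdivrMr // mulrC.
pose A := `|u|.
pose M := (b + alpha * A) / a.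
pose rb := Num.max `|x0| M.
have rb0 : 0 <= rb by rewrite le_max normr_ge0.
have rbM : M <= rb by rewrite le_max lexx orbT.
have aM : a * M = b + alpha * A by rewrite /M mulrC divfK // gt_eqF.
have Esq : (fun s => ip (x s) (x s)) = (fun s => `|x s| * `|x s|).
  by apply: funext => s; rewrite -Hn expr2.
have Hip_dx : forall t v, 0 < t -> tau * ip v (dx t) =
    - (dVr `|x t| (xs t) / `|x t|) * ip v (x t) + alpha * ip v u.
  move=> t v ht; rewrite -(ipZr Hip) Hode // (ipDr Hip) !(ipZr Hip) //.
have xb : forall t, 0 <= t -> `|x t| <= rb.
  move=> t ht.
  suff : `|x t| * `|x t| <= rb * rb by nra.
  have := @barrier R (fun s => `|x s| * `|x s|) (fun s => 2 * ip (x s) (dx s)) 0 (rb * rb).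
  apply => //.
  - move=> s; apply: cvgM; apply: cvg_norm; exact: Hxc.
  - by move=> s hs; rewrite -Esq; apply: deriv_ipsq => //; apply: Hdx.
  - have : `|x0| <= rb by rewrite le_max lexx.
    by rewrite Hx0; have := normr_ge0 x0; nra.
  move=> s hs hgt.
  have rpos : rb < `|x s| by have := normr_ge0 (x s); nra.
  have r0 : 0 < `|x s| by apply: le_lt_trans rpos.
  have E := Hip_dx s (x s) hs.
  rewrite -Hn in E.
  have dl := HA1l `|x s| (xs s) (normr_ge0 _) (xs_ge0 s (ltW hs)).
  have ipu := ip_le Hip (x s) u.
  have E2 : dVr `|x s| (xs s) / `|x s| * `|x s| ^+ 2 = dVr `|x s| (xs s) * `|x s|.
    by rewrite expr2 mulrA divfK // gt_eqF.
  have : tau * ip (x s) (dx s) <= 0.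
    rewrite E mulNr E2.
    have : a * M <= a * `|x s| by rewrite ler_pM2l //; apply: le_trans rbM (ltW rpos).
    rewrite aM -/A => h1.
    rewrite -/A in ipu.
    have h2 : alpha * ip (x s) u <= alpha * (`|x s| * A) by rewrite ler_pM2l.
    nra.
  nra.
pose C := `|xs0| + g rb.
have grb0 : 0 <= g rb := Hg0 rb rb0.
have xs_le : forall t, 0 <= t -> xs t <= C.
  move=> t ht.
  have := @barrier R xs dxs 0 C.
  apply => //.
  - by rewrite Hxs0' /C ger0_norm //; rewrite lerDl.
  move=> s hs hgt.
  have gle : g `|x s| <= g rb.
    apply: Hgm; rewrite ?in_itv /= ?andbT ?normr_ge0 //.
    exact: xb (ltW hs).
  have := Hodes s hs.
  have : 0 <= `|xs0| := normr_ge0 _.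
  rewrite /C in hgt; nra.
pose K := h rb.
have K0 : 0 <= K := Hh0 rb rb0.
have dVle : forall t, 0 <= t -> dVr `|x t| (xs t) <= K * `|x t|.
  move=> t ht; apply: HA1u => //.
    by rewrite normr_ge0 xb.
  by rewrite xs_ge0 // xs_le.
pose m := alpha * A ^+ 2 / (2 * (K + 1)).
have m0 : 0 < m.
  apply: divr_gt0; first by apply: mulr_gt0 => //; apply: exprn_gt0.
  by apply: mulr_gt0 => //; apply: ltr_wpDl.
pose d0 := Num.min (A * (alpha * A - b)) (alpha * A ^+ 2 / 2).
have d00 : 0 < d0.
  rewrite lt_min; apply/andP; split.
    by apply: mulr_gt0 => //; rewrite subr_gt0.
  by apply: divr_gt0 => //; apply: mulr_gt0 => //; apply: exprn_gt0.
pose y := fun s => ip (x s) u.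
have ydr : forall t : R, 0 < t -> is_derive t 1 y (ip (dx t) u).
  by move=> t ht; apply: deriv_ipv => //; apply: Hdx.
have yd : forall t : R, 0 < t -> y t < m -> d0 <= tau * ip (dx t) u.
  move=> t ht ylt.
  rewrite (Hs (dx t)) Hip_dx // (Hs u (x t)) -Hn -/A -/(y t).
  have [r0|rpos] := eqVneq `|x t| 0.
    rewrite r0 invr0 mulr0 oppr0 mul0r add0r.
    rewrite /d0 ge_min; apply/orP; right.
    have : 0 < alpha * A ^+ 2 by apply: mulr_gt0 => //; apply: exprn_gt0.
    lra.
  have rp : 0 < `|x t| by rewrite lt_neqAle eq_sym rpos normr_ge0.
  pose r := `|x t|.
  pose dv := dVr `|x t| (xs t).
  pose c := dv / r.
  have cr : c * r = dv by rewrite /c divfK // gt_eqF.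
  have yge := ip_ge Hip (x t) u; rewrite -/A -/r -/(y t) in yge.
  have [yneg|ypos] := ltP (y t) 0.
    have dl : a * r - b <= dv := HA1l _ _ (normr_ge0 _) (xs_ge0 t (ltW ht)).
    pose q := - y t / r.
    have q0 : 0 < q by apply: divr_gt0 => //; rewrite oppr_gt0.
    have qA : q <= A by rewrite /q ler_pdivrMr //; lra.
    have yq : y t = - (q * r).
      by rewrite /q divfK ?opprK //.
    have -> : - (dVr `|x t| (xs t) / `|x t|) * y t = dv * q.
      by rewrite yq -/r -/dv mulrN mulNr opprK (mulrC q r) mulrA divfK // gt_eqF.
    have h1 : (a * r - b) * q <= dv * q by rewrite ler_pM2r.
    have h2 : 0 <= a * r * q.
      by apply: mulr_ge0; [apply: mulr_ge0; [exact: ltW | exact: ltW rp] | exact: ltW].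
    have h3 : b * q <= b * A by apply: ler_wpM2l.
    rewrite /d0 ge_min; apply/orP; left.
    nra.
  have cK : c <= K.
    rewrite /c ler_pdivrMr //; exact: dVle (ltW ht).
  have h1 : c * y t <= K * y t by apply: ler_wpM2r.
  have h2 : K * y t <= K * m by apply: ler_wpM2l => //; apply: ltW.
  have h3 : K * m <= alpha * A ^+ 2 / 2.
    have K1 : K + 1 != 0 by rewrite gt_eqF // ltr_wpDl.
    have -> : K * m = (alpha * A ^+ 2 / 2) * (K / (K + 1)).
      by rewrite /m; field; rewrite K1.
    apply: ler_piMr.
      by apply: divr_ge0; [apply: mulr_ge0; [exact: ltW|apply: sqr_ge0]|].
    rewrite ler_pdivrMr; last exact: ltr_wpDl.
    lra.
  rewrite /d0 ge_min; apply/orP; right.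
  rewrite -/c; nra.
have dt0 : 0 < d0 / tau by apply: divr_gt0.
have dd : forall t : R, 0 < t -> y t < m -> d0 / tau <= ip (dx t) u.
  by move=> t ht hy; rewrite ler_pdivrMr // mulrC; apply: yd.
have [t1 [t1ge ymt1]] : exists t1, 1 <= t1 /\ m <= y t1.
  case: (pselect (exists t1, 1 <= t1 /\ m <= y t1)) => // Hno; exfalso.
  have Hall : forall t, 1 <= t -> y t < m.
    move=> t ht; rewrite ltNge; apply/negP => hm; apply: Hno; by exists t.
  pose L := `|m - y 1| / (d0 / tau) + 1.
  have L0 : 0 < L by apply: ltr_wpDl => //; apply: divr_ge0 => //; exact: ltW.
  have m1 : 1 < 1 + L by rewrite ltrDl.
  have m2 : forall z, z \in `]1, 1 + L[ -> is_derive z 1 y (ip (dx z) u).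
    move=> z; rewrite in_itv /= => /andP [hz _]; apply: ydr.
    exact: lt_trans ltr01 hz.
  have m3 : {within `[1, 1 + L], continuous y}.
    apply: derivable_within_continuous => z; rewrite in_itv /= => /andP [hz _].
    exact: (@ex_derive _ _ _ _ _ _ _ (ydr z (lt_le_trans ltr01 hz))).
  have [xi xiI Hm] := MVT m1 m2 m3.
  move: xiI; rewrite in_itv /= => /andP [h1 h2].
  have xi0 : 0 < xi by apply: lt_trans ltr01 h1.
  have hd := dd xi xi0 (Hall xi (ltW h1)).
  have hL : d0 / tau * L <= ip (dx xi) u * L by rewrite ler_pM2r.
  have E : d0 / tau * L = `|m - y 1| + d0 / tau.
    rewrite /L mulrDr mulr1; congr (_ + _); rewrite mulrC divfK // gt_eqF //.
  have := Hall (1 + L); rewrite lerDl => /(_ (ltW L0)).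
  have := ler_norm (m - y 1).
  rewrite addrC in Hm.
  lra.
have ylow : forall t, t1 <= t -> m <= y t.
  move=> t ht; rewrite -lerN2.
  apply: (@barrier R (- y) (fun s => - ip (dx s) u) t1 (- m)) => //.
  - apply: derivable_within_continuous => z; rewrite in_itv /= => /andP [hz _].
    have z0 : 0 < z by apply: lt_le_trans ltr01 (le_trans t1ge hz).
    exact: (@ex_derive _ _ _ _ _ _ _ (is_deriveN (ydr z z0))).
  - move=> s hs; apply: is_deriveN; apply: ydr.
    exact: lt_le_trans ltr01 (le_trans t1ge (ltW hs)).
  - by change (- y t1 <= - m); rewrite lerN2.
  move=> s hs; change (- m < - y s -> - ip (dx s) u <= 0); rewrite ltrN2 oppr_le0 => hlt.
  have s0 : 0 < s by apply: lt_le_trans ltr01 (le_trans t1ge (ltW hs)).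
  exact: ltW (lt_le_trans dt0 (dd s s0 hlt)).
have t10 : 0 <= t1 by apply: le_trans ler01 t1ge.
exists t1, (m / A), (rb + 1); split => //.
- exact: divr_gt0.
- by apply: ltr_wpDl.
move=> t ht; apply/andP; split.
  rewrite ler_pdivrMr //.
  have := ylow t ht; have := ip_le Hip (x t) u; rewrite -/A /y; lra.
have := xb t (le_trans t10 ht); lra.
Qed.
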